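(* Let $(\mathcal{A},\mu,\alpha)$ be a multiplicative Hom-alternative superalgebra and define $f:\mathcal{A}^{4}\to\mathcal{A}$ by $f(t,x,y,z)=\widetilde{as}(tx,\alpha(y),\alpha(z))-(-1)^{|t|(|x|+|y|+|z|)}\widetilde{as}(x,y,z)\alpha^{2}(t)-(-1)^{|t||x|}\alpha^{2}(x)\widetilde{as}(t,y,z)$. Then $f$ is super-alternating.
   Context: $\mathcal{A}=\mathcal{A}_0\oplus\mathcal{A}_1$ is a $\mathbb{Z}_2$-graded vector space over an algebraically closed field $\mathbb{K}$ of characteristic $0$; $|x|$ is the parity of homogeneous $x$; even maps preserve parity; we write $\mu(x,y)=xy$ and extend $f$ multilinearly. $\widetilde{as}(x,y,z)=(xy)\alpha(z)-\alpha(x)(yz)$. A Hom-alternative superalgebra is a triple $(\mathcal{A},\mu,\alpha)$ ($\mu$ even bilinear, $\alpha$ even linear) with $\widetilde{as}(x,y,z)+(-1)^{|x||y|}\widetilde{as}(y,x,z)=0$ and $\widetilde{as}(x,y,z)+(-1)^{|y||z|}\widetilde{as}(x,z,y)=0$ for homogeneous $x,y,z$; multiplicative means $\alpha(xy)=\alpha(x)\alpha(y)$. A multilinear map on homogeneous arguments is super-alternating if interchanging any two adjacent arguments $a,b$ multiplies the value by $-(-1)^{|a||b|}$. *)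

(* Defs.v *)
From HB Require Import structures.
From mathcomp Require Import all_boot all_order all_algebra.
Set Implicit Arguments. Unset Strict Implicit. Unset Printing Implicit Defensive.
Import Order.TTheory GRing.Theory Num.Theory.
Local Open Scope ring_scope.

(* A Z_2-graded vector space A = A_0 (+) A_1 over K is modelled as the
   product module (A0 * A1); an element x is homogeneous of parity p
   when its component in the other summand vanishes. *)
Definition is_hom (K : fieldType) (A0 A1 : lmodType K) (x : (A0 * A1)%type)
  (p : bool) : bool := if p then x.1 == 0 else x.2 == 0.

Definition sgn (R : pzRingType) (n : nat) : R := (-1) ^+ n.

Definition hom_as (V : zmodType) (mu : V -> V -> V) (alpha : V -> V)
  (x y z : V) : V := mu (mu x y) (alpha z) - mu (alpha x) (mu y z).

Definition multiplicative_hom_alt_superalgebra (K : fieldType)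
  (A0 A1 : lmodType K) (mu : (A0 * A1)%type -> (A0 * A1)%type -> (A0 * A1)%type)
  (alpha : (A0 * A1)%type -> (A0 * A1)%type) : Prop :=
  (forall (a : K) x y z, mu (a *: x + y) z = a *: mu x z + mu y z) /\
  (forall (a : K) x y z, mu z (a *: x + y) = a *: mu z x + mu z y) /\
  (forall (a : K) x y, alpha (a *: x + y) = a *: alpha x + alpha y) /\
  (forall x y (p q : bool), is_hom x p -> is_hom y q -> is_hom (mu x y) (p (+) q)) /\
  (forall x (p : bool), is_hom x p -> is_hom (alpha x) p) /\
  (forall x y z (px py pz : bool), is_hom x px -> is_hom y py -> is_hom z pz ->
     hom_as mu alpha x y z + sgn K (px * py) *: hom_as mu alpha y x z = 0) /\
  (forall x y z (px py pz : bool), is_hom x px -> is_hom y py -> is_hom z pz ->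
     hom_as mu alpha x y z + sgn K (py * pz) *: hom_as mu alpha x z y = 0) /\
  (forall x y, alpha (mu x y) = mu (alpha x) (alpha y)).

(* f(t,x,y,z) for homogeneous t,x,y,z of parities pt,px,py,pz *)
Definition fmap (K : fieldType) (A0 A1 : lmodType K)
  (mu : (A0 * A1)%type -> (A0 * A1)%type -> (A0 * A1)%type)
  (alpha : (A0 * A1)%type -> (A0 * A1)%type)
  (pt px py pz : bool) (t x y z : (A0 * A1)%type) : (A0 * A1)%type :=
  hom_as mu alpha (mu t x) (alpha y) (alpha z)
  - sgn K (pt * (px + py + pz)) *: mu (hom_as mu alpha x y z) (alpha (alpha t))
  - sgn K (pt * px) *: mu (alpha (alpha x)) (hom_as mu alpha t y z).

Definition fmap_super_alternating (K : fieldType) (A0 A1 : lmodType K)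
  (mu : (A0 * A1)%type -> (A0 * A1)%type -> (A0 * A1)%type)
  (alpha : (A0 * A1)%type -> (A0 * A1)%type) : Prop :=
  forall (t x y z : (A0 * A1)%type) (pt px py pz : bool),
    is_hom t pt -> is_hom x px -> is_hom y py -> is_hom z pz ->
    [/\ fmap mu alpha px pt py pz x t y z
          = - (sgn K (pt * px) *: fmap mu alpha pt px py pz t x y z),
        fmap mu alpha pt py px pz t y x z
          = - (sgn K (px * py) *: fmap mu alpha pt px py pz t x y z)
      & fmap mu alpha pt px pz py t x z y
          = - (sgn K (py * pz) *: fmap mu alpha pt px py pz t x y z)].

(* Main.v *)
Require Import Defs.
From HB Require Import structures.
From mathcomp Require Import all_boot all_order all_algebra.
Import GRing.Theory.
Local Open Scope ring_scope.

Inductive lexpr := LAt of nat | LAdd of lexpr & lexpr | LOpp of lexpr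
  | LZero | LSgn of nat & lexpr.

Fixpoint cadd (l1 l2 : seq int) : seq int :=
  match l1, l2 with
  | [::], l => l
  | l, [::] => l
  | a :: l1', b :: l2' => (a + b) :: cadd l1' l2'
  end.
Definition copp (l : seq int) : seq int := map (fun a => - a) l.
Definition csingle (n : nat) : seq int := rcons (nseq n 0) 1.

Fixpoint lnorm (e : lexpr) : seq int :=
  match e with
  | LAt n => csingle n
  | LAdd a b => cadd (lnorm a) (lnorm b)
  | LOpp a => copp (lnorm a)
  | LZero => [::]
  | LSgn n a => if odd n then copp (lnorm a) else lnorm a
  end.

Definition allz (l : seq int) : bool := all (fun c => c == 0) l.

Section R.
Variables (K : pzRingType) (V : lmodType K).

Fixpoint linterp (env : seq V) (e : lexpr) : V :=
  match e with
  | LAt n => nth 0 env n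
  | LAdd a b => linterp env a + linterp env b
  | LOpp a => - linterp env a
  | LZero => 0
  | LSgn n a => sgn K n *: linterp env a
  end.

Fixpoint linI (env : seq V) (l : seq int) : V :=
  match l with
  | [::] => 0
  | c :: l' => (nth 0 env 0) *~ c + linI (behead env) l'
  end.

Lemma linI_add env l1 l2 : linI env (cadd l1 l2) = linI env l1 + linI env l2.
Proof.
elim: l1 l2 env => [|a l1 IH] [|b l2] env /=; rewrite ?add0r ?addr0 //.
by rewrite IH mulrzDr addrACA.
Qed.

Lemma linI_opp env l : linI env (copp l) = - linI env l.
Proof.
elim: l env => [|a l IH] env /=; first by rewrite oppr0.
by rewrite IH mulrNz opprD.
Qed.

Lemma linI_single env n : linI env (csingle n) = nth 0 env n.
Proof.
elim: n env => [|n IH] env /=; first by rewrite mulr1z addr0 nth0.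
by rewrite mulr0z add0r IH nth_behead.
Qed.

Lemma sgn_scale n (v : V) : sgn K n *: v = if odd n then - v else v.
Proof. by rewrite /sgn -signr_odd; case: (odd n); rewrite ?scaleN1r ?scale1r. Qed.

Lemma lnorm_ok env e : linterp env e = linI env (lnorm e).
Proof.
elim: e => [n|a IHa b IHb|a IHa||n a IHa] /=.
- by rewrite linI_single.
- by rewrite linI_add IHa IHb.
- by rewrite linI_opp IHa.
- by [].
- by rewrite sgn_scale IHa; case: (odd n); rewrite ?linI_opp.
Qed.

Lemma linI_allz env l : allz l -> linI env l = 0.
Proof.
elim: l env => [|a l IH] env //= /andP [/eqP -> H].
by rewrite mulr0z add0r IH.
Qed.

Lemma lcheck env e : allz (lnorm e) -> linterp env e = 0.
Proof. by move=> H; rewrite lnorm_ok linI_allz. Qed.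

Lemma comb_step (c : K) (e v : V) : e = 0 -> v - c *: e = 0 -> v = 0.
Proof. by move=> -> ; rewrite scaler0 subr0. Qed.
End R.

Ltac lookup x l :=
  lazymatch l with
  | x :: _ => constr:(0%nat)
  | _ :: ?l' => let n := lookup x l' in constr:(S n)
  end.

Ltac has_atom x l :=
  lazymatch l with
  | x :: _ => idtac
  | _ :: ?l' => has_atom x l'
  end.

Ltac collect t l :=
  lazymatch t with
  | @GRing.add _ ?a ?b => let l1 := collect a l in collect b l1
  | @GRing.opp _ ?a => collect a l
  | @GRing.zero _ => l
  | @GRing.scale _ _ (sgn _ _) ?a => collect a l
  | _ => match tt with
         | _ => let _ := match tt with _ => has_atom t l end in l
         | _ => constr:(t :: l)
         end
  end.

Ltac reify t l :=
  lazymatch t with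
  | @GRing.add _ ?a ?b => let ra := reify a l in let rb := reify b l in constr:(LAdd ra rb)
  | @GRing.opp _ ?a => let ra := reify a l in constr:(LOpp ra)
  | @GRing.zero _ => constr:(LZero)
  | @GRing.scale _ _ (sgn _ ?n) ?a => let ra := reify a l in constr:(LSgn n ra)
  | _ => let n := lookup t l in constr:(LAt n)
  end.

Ltac lsolve :=
  lazymatch goal with
  | |- ?v = 0 =>
    let T := type of v in
    let l := collect v (@nil T) in
    let e := reify v l in
    change (@linterp _ _ l e = 0); apply: lcheck; vm_compute; reflexivity
  end.


Theorem mainTheorem11 (K : closedFieldType) (hK : [pchar K] =i pred0)
  (A0 A1 : lmodType K)
  (mu : (A0 * A1)%type -> (A0 * A1)%type -> (A0 * A1)%type)
  (alpha : (A0 * A1)%type -> (A0 * A1)%type)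
  (hA : multiplicative_hom_alt_superalgebra mu alpha) :
  fmap_super_alternating mu alpha.
Proof.
case: hA => [mDl [mDr [aL [hmu [hal [hLA [hRA hmul]]]]]]].
have muDl a b c : mu (a + b) c = mu a c + mu b c by rewrite -{1}[a]scale1r mDl scale1r.
have muDr a b c : mu c (a + b) = mu c a + mu c b by rewrite -{1}[a]scale1r mDr scale1r.
have mu0l c : mu 0 c = 0 by apply/(addrI (mu 0 c)); rewrite -muDl !addr0.
have mu0r c : mu c 0 = 0 by apply/(addrI (mu c 0)); rewrite -muDr !addr0.
have muZl k a c : mu (k *: a) c = k *: mu a c by rewrite -[k *: a]addr0 mDl mu0l addr0.
have muZr k a c : mu c (k *: a) = k *: mu c a by rewrite -[k *: a]addr0 mDr mu0r addr0.
have muNl a c : mu (- a) c = - mu a c by rewrite -scaleN1r muZl scaleN1r.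
have muNr a c : mu c (- a) = - mu c a by rewrite -scaleN1r muZr scaleN1r.
have dbl (v : (A0 * A1)%type) : v + v = 0 -> v = 0.
  move=> H; have h2 : (2%:R : K) != 0 by move/pcharf0P: hK => ->.
  by rewrite -[v]scale1r -(mulVf h2) -scalerA scaler_nat (mulr2n v) H scaler0.
move=> t x y z pt px py pz Ht Hx Hy Hz.
have E0 := hLA (mu t x) (alpha y) (alpha z) (pt (+) px) py pz (hmu _ _ _ _ Ht Hx) (hal _ _ Hy) (hal _ _ Hz).
have E1 := hRA (mu t x) (alpha y) (alpha z) (pt (+) px) py pz (hmu _ _ _ _ Ht Hx) (hal _ _ Hy) (hal _ _ Hz).
have E2 := congr1 (fun w => mu w (alpha (alpha z))) (hLA t x y pt px py Ht Hx Hy).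
have E3 := congr1 (fun w => mu w (alpha (alpha z))) (hRA t x y pt px py Ht Hx Hy).
have E4 := congr1 (fun w => mu (alpha (alpha z)) w) (hRA t x y pt px py Ht Hx Hy).
have E5 := hLA (mu t x) (alpha z) (alpha y) (pt (+) px) pz py (hmu _ _ _ _ Ht Hx) (hal _ _ Hz) (hal _ _ Hy).
have E6 := congr1 (fun w => mu w (alpha (alpha y))) (hLA t x z pt px pz Ht Hx Hz).
have E7 := congr1 (fun w => mu (alpha (alpha y)) w) (hLA t x z pt px pz Ht Hx Hz).
have E8 := congr1 (fun w => mu w (alpha (alpha y))) (hRA t x z pt px pz Ht Hx Hz).
have E9 := hLA (mu t y) (alpha x) (alpha z) (pt (+) py) px pz (hmu _ _ _ _ Ht Hy) (hal _ _ Hx) (hal _ _ Hz).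
have E10 := hRA (mu t y) (alpha x) (alpha z) (pt (+) py) px pz (hmu _ _ _ _ Ht Hy) (hal _ _ Hx) (hal _ _ Hz).
have E11 := hRA (alpha x) (mu t y) (alpha z) px (pt (+) py) pz (hal _ _ Hx) (hmu _ _ _ _ Ht Hy) (hal _ _ Hz).
have E12 := congr1 (fun w => mu w (alpha (alpha z))) (hLA t y x pt py px Ht Hy Hx).
have E13 := hLA (mu t y) (alpha z) (alpha x) (pt (+) py) pz px (hmu _ _ _ _ Ht Hy) (hal _ _ Hz) (hal _ _ Hx).
have E14 := congr1 (fun w => mu (alpha (alpha x)) w) (hLA t y z pt py pz Ht Hy Hz).
have E15 := congr1 (fun w => mu w (alpha (alpha x))) (hRA t y z pt py pz Ht Hy Hz).
have E16 := congr1 (fun w => mu (alpha (alpha x)) w) (hRA t y z pt py pz Ht Hy Hz).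
have E17 := hLA (alpha x) (alpha y) (mu t z) px py (pt (+) pz) (hal _ _ Hx) (hal _ _ Hy) (hmu _ _ _ _ Ht Hz).
have E18 := congr1 (fun w => mu w (alpha (alpha y))) (hLA t z x pt pz px Ht Hz Hx).
have E19 := congr1 (fun w => mu w (alpha (alpha x))) (hLA t z y pt pz py Ht Hz Hy).
have E20 := congr1 (fun w => mu (alpha (alpha x)) w) (hLA t z y pt pz py Ht Hz Hy).
have E21 := hLA (mu x t) (alpha y) (alpha z) (px (+) pt) py pz (hmu _ _ _ _ Hx Ht) (hal _ _ Hy) (hal _ _ Hz).
have E22 := congr1 (fun w => mu w (alpha (alpha y))) (hRA x t z px pt pz Hx Ht Hz).
have E23 := hLA (mu x y) (alpha t) (alpha z) (px (+) py) pt pz (hmu _ _ _ _ Hx Hy) (hal _ _ Ht) (hal _ _ Hz).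
have E24 := hRA (mu x y) (alpha t) (alpha z) (px (+) py) pt pz (hmu _ _ _ _ Hx Hy) (hal _ _ Ht) (hal _ _ Hz).
have E25 := hRA (alpha t) (mu x y) (alpha z) pt (px (+) py) pz (hal _ _ Ht) (hmu _ _ _ _ Hx Hy) (hal _ _ Hz).
have E26 := hLA (alpha t) (alpha z) (mu x y) pt pz (px (+) py) (hal _ _ Ht) (hal _ _ Hz) (hmu _ _ _ _ Hx Hy).
have E27 := congr1 (fun w => mu w (alpha (alpha z))) (hLA x y t px py pt Hx Hy Ht).
have E28 := congr1 (fun w => mu w (alpha (alpha t))) (hLA x y z px py pz Hx Hy Hz).
have E29 := congr1 (fun w => mu (alpha (alpha t)) w) (hLA x y z px py pz Hx Hy Hz).
have E30 := congr1 (fun w => mu w (alpha (alpha t))) (hRA x y z px py pz Hx Hy Hz).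
have E31 := hLA (mu x z) (alpha t) (alpha y) (px (+) pz) pt py (hmu _ _ _ _ Hx Hz) (hal _ _ Ht) (hal _ _ Hy).
have E32 := hRA (alpha t) (mu x z) (alpha y) pt (px (+) pz) py (hal _ _ Ht) (hmu _ _ _ _ Hx Hz) (hal _ _ Hy).
have E33 := hLA (alpha t) (alpha y) (mu x z) pt py (px (+) pz) (hal _ _ Ht) (hal _ _ Hy) (hmu _ _ _ _ Hx Hz).
have E34 := hLA (mu y t) (alpha x) (alpha z) (py (+) pt) px pz (hmu _ _ _ _ Hy Ht) (hal _ _ Hx) (hal _ _ Hz).
have E35 := congr1 (fun w => mu (alpha (alpha x)) w) (hRA y t z py pt pz Hy Ht Hz).
have E36 := hLA (mu y x) (alpha t) (alpha z) (py (+) px) pt pz (hmu _ _ _ _ Hy Hx) (hal _ _ Ht) (hal _ _ Hz).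
have E37 := hRA (alpha t) (mu y x) (alpha z) pt (py (+) px) pz (hal _ _ Ht) (hmu _ _ _ _ Hy Hx) (hal _ _ Hz).
have E38 := hLA (alpha t) (alpha z) (mu y x) pt pz (py (+) px) (hal _ _ Ht) (hal _ _ Hz) (hmu _ _ _ _ Hy Hx).
have E39 := hLA (mu y z) (alpha t) (alpha x) (py (+) pz) pt px (hmu _ _ _ _ Hy Hz) (hal _ _ Ht) (hal _ _ Hx).
have E40 := hRA (mu y z) (alpha t) (alpha x) (py (+) pz) pt px (hmu _ _ _ _ Hy Hz) (hal _ _ Ht) (hal _ _ Hx).
have E41 := hRA (alpha t) (mu y z) (alpha x) pt (py (+) pz) px (hal _ _ Ht) (hmu _ _ _ _ Hy Hz) (hal _ _ Hx).
have E42 := hLA (alpha t) (alpha x) (mu y z) pt px (py (+) pz) (hal _ _ Ht) (hal _ _ Hx) (hmu _ _ _ _ Hy Hz).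
have E43 := hLA (mu y z) (alpha x) (alpha t) (py (+) pz) px pt (hmu _ _ _ _ Hy Hz) (hal _ _ Hx) (hal _ _ Ht).
have E44 := hRA (mu z t) (alpha x) (alpha y) (pz (+) pt) px py (hmu _ _ _ _ Hz Ht) (hal _ _ Hx) (hal _ _ Hy).
have E45 := hRA (alpha x) (mu z t) (alpha y) px (pz (+) pt) py (hal _ _ Hx) (hmu _ _ _ _ Hz Ht) (hal _ _ Hy).
rewrite /hom_as in E0 E1 E2 E3 E4 E5 E6 E7 E8 E9 E10 E11 E12 E13 E14 E15 E16 E17 E18 E19 E20 E21 E22 E23 E24 E25 E26 E27 E28 E29 E30 E31 E32 E33 E34 E35 E36 E37 E38 E39 E40 E41 E42 E43 E44 E45.
rewrite ?(muDl, muNl, muZl, muDr, muNr, muZr, hmul, mu0l, mu0r) in E0 E1 E2 E3 E4 E5 E6 E7 E8 E9 E10 E11 E12 E13 E14 E15 E16 E17 E18 E19 E20 E21 E22 E23 E24 E25 E26 E27 E28 E29 E30 E31 E32 E33 E34 E35 E36 E37 E38 E39 E40 E41 E42 E43 E44 E45.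
split; apply/eqP; rewrite -addr_eq0; apply/eqP; rewrite /fmap /hom_as; rewrite ?(muDl, muNl, muZl, muDr, muNr, muZr, hmul, mu0l, mu0r).
- apply: (@comb_step _ _ (sgn K (1 + pt*px)%N) _ _ E1).
  apply: (@comb_step _ _ (sgn K (pt*px)%N) _ _ E2).
  apply: (@comb_step _ _ (sgn K (pt*px)%N) _ _ E3).
  apply: (@comb_step _ _ (sgn K (py*pz + px*pz + pt*pz + pt*px)%N) _ _ E4).
  apply: (@comb_step _ _ (sgn K (py*pz + pt*px)%N) _ _ E5).
  apply: (@comb_step _ _ (sgn K (py*pz + pt*px)%N) _ _ E6).
  apply: (@comb_step _ _ (sgn K (1 + py*pz + pt*px)%N) _ _ E8).
  apply: (@comb_step _ _ (sgn K (1 + px*py + pt*px)%N) _ _ E10).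
  apply: (@comb_step _ _ (sgn K 0%N) _ _ E11).
  apply: (@comb_step _ _ (sgn K (px*pz + px*py + pt*px)%N) _ _ E13).
  apply: (@comb_step _ _ (sgn K (1)%N) _ _ E14).
  apply: (@comb_step _ _ (sgn K (1 + px*pz + px*py + pt*px)%N) _ _ E15).
  apply: (@comb_step _ _ (sgn K 0%N) _ _ E16).
  apply: (@comb_step _ _ (sgn K (py*pz + px*pz + pt*px)%N) _ _ E18).
  apply: (@comb_step _ _ (sgn K (py*pz + px*pz + px*py + pt*px)%N) _ _ E19).
  apply: (@comb_step _ _ (sgn K (1 + py*pz)%N) _ _ E20).
  apply: (@comb_step _ _ (sgn K (1 + py*pz)%N) _ _ E22).
  apply: (@comb_step _ _ (sgn K (pt*py)%N) _ _ E23).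
  apply: (@comb_step _ _ (sgn K (1 + pt*py)%N) _ _ E24).
  apply: (@comb_step _ _ (sgn K (pt*px)%N) _ _ E25).
  apply: (@comb_step _ _ (sgn K (1 + py*pz + px*pz + pt*px)%N) _ _ E26).
  apply: (@comb_step _ _ (sgn K (pt*px)%N) _ _ E29).
  apply: (@comb_step _ _ (sgn K (py*pz + pt*pz)%N) _ _ E31).
  apply: (@comb_step _ _ (sgn K (1 + py*pz + pt*px)%N) _ _ E32).
  apply: (@comb_step _ _ (sgn K (pt*py)%N) _ _ E35).
  apply: (@comb_step _ _ (sgn K (px*py + pt*px)%N) _ _ E37).
  apply: (@comb_step _ _ (sgn K (1 + py*pz + px*pz + px*py + pt*px)%N) _ _ E38).
  apply: (@comb_step _ _ (sgn K (px*pz + px*py + pt*pz + pt*py + pt*px)%N) _ _ E39).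
  apply: (@comb_step _ _ (sgn K (1 + px*pz + px*py + pt*pz + pt*py + pt*px)%N) _ _ E40).
  apply: (@comb_step _ _ (sgn K (1 + px*pz + px*py + pt*px)%N) _ _ E41).
  apply: (@comb_step _ _ (sgn K (1 + pt*px)%N) _ _ E42).
  apply: (@comb_step _ _ (sgn K (px*pz + px*py + pt*pz + pt*py)%N) _ _ E43).
  apply: (@comb_step _ _ (sgn K (1 + py*pz + px*pz + pt*pz + pt*px)%N) _ _ E44).
  apply: (@comb_step _ _ (sgn K (1 + py*pz + pt*pz)%N) _ _ E45).
  destruct pt, px, py, pz; lsolve.
- apply: dbl.
  apply: (@comb_step _ _ (sgn K (px*py)%N) _ _ E0).
  apply: (@comb_step _ _ (sgn K (px*py)%N) _ _ E2).
  apply: (@comb_step _ _ (sgn K (1 + pt*py)%N) _ _ E7).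
  apply: (@comb_step _ _ (sgn K 0%N) _ _ E9).
  apply: (@comb_step _ _ (sgn K 0%N) _ _ E12).
  apply: (@comb_step _ _ (sgn K (1 + px*py + pt*px)%N) _ _ E14).
  apply: (@comb_step _ _ (sgn K (px*py + pt*py + pt*px)%N) _ _ E17).
  apply: (@comb_step _ _ (sgn K (1 + px*py + pt*px)%N) _ _ E21).
  apply: (@comb_step _ _ (sgn K (px*py + pt*py + pt*px)%N) _ _ E23).
  apply: (@comb_step _ _ (sgn K (1 + px*py + pt*py + pt*px)%N) _ _ E27).
  apply: (@comb_step _ _ (sgn K (1 + px*py + pt*pz + pt*py + pt*px)%N) _ _ E28).
  apply: (@comb_step _ _ (sgn K (1 + px*py + pt*pz + pt*py + pt*px)%N) _ _ E28).
  apply: (@comb_step _ _ (sgn K (px*py)%N) _ _ E29).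
  apply: (@comb_step _ _ (sgn K (1)%N) _ _ E33).
  apply: (@comb_step _ _ (sgn K (1 + pt*py)%N) _ _ E34).
  apply: (@comb_step _ _ (sgn K (pt*py + pt*px)%N) _ _ E36).
  apply: (@comb_step _ _ (sgn K (1 + px*py)%N) _ _ E42).
  destruct pt, px, py, pz; lsolve.
- apply: (@comb_step _ _ (sgn K (py*pz)%N) _ _ E1).
  apply: (@comb_step _ _ (sgn K (1 + py*pz + pt*px)%N) _ _ E16).
  apply: (@comb_step _ _ (sgn K (1 + py*pz + pt*pz + pt*py + pt*px)%N) _ _ E30).
  destruct pt, px, py, pz; lsolve.
Qed.
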